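(* Let $G$ be a connected undirected graph with positive edge weights, weighted adjacency matrix $\mathbf{A}$, degree matrix $\mathbf{D}$ (degrees $d_u$) and Laplacian $\mathbf{L}=\mathbf{D}-\mathbf{A}$, and let $\pi=\frac{\mathbf{D}\mathbf{1}}{\mathbf{1}^\top\mathbf{D}\mathbf{1}}$. For each vertex $u$ define $\sigma_u=\frac12\sum_{t=0}^\infty\left(\left(\frac12\mathbf{I}+\frac12\mathbf{A}\mathbf{D}^{-1}\right)^t\mathbf{1_u}-\pi\right)$. Let $\varepsilon>0$ and suppose vectors $\widetilde{\sigma}_u$ satisfy $\|\widetilde{\sigma}_u-\sigma_u\|_\infty\le\varepsilon/4$ for all $u$. Then for every edge $(u,v)$ of $G$, the quantity $$\frac{1}{d_u}(\widetilde{\sigma}_u)_u-\frac{1}{d_v}(\widetilde{\sigma}_u)_v+\frac{1}{d_v}(\widetilde{\sigma}_v)_v-\frac{1}{d_u}(\widetilde{\sigma}_v)_u$$ is a $(1+\varepsilon)$-approximation to the effective resistance $R(u,v)$.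
   Context: $R(u,v)=(\mathbf{1_u}-\mathbf{1_v})^\top\mathbf{L}^+(\mathbf{1_u}-\mathbf{1_v})$ with $\mathbf{L}^+$ the pseudoinverse. A $(1+\varepsilon)$-approximation $\widetilde R$ of $R$ satisfies $(1-\varepsilon)R\le\widetilde R\le(1+\varepsilon)R$. *)

(* Defs.v *)
From HB Require Import structures.
From mathcomp Require Import all_boot all_order all_algebra.
From mathcomp Require Import all_classical all_reals all_analysis.
Set Implicit Arguments. Unset Strict Implicit. Unset Printing Implicit Defensive.
Import Order.TTheory GRing.Theory Num.Theory.
Local Open Scope ring_scope.
Local Open Scope classical_set_scope.
Import numFieldNormedType.Exports.

Section Defs.
Variables (R : realType) (n : nat).
Implicit Types (A L X : 'M[R]_n) (u v x : 'I_n).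

Definition deg A u : R := \sum_(v < n) A u v.

Definition degmx A : 'M[R]_n := \matrix_(i, j) ((i == j)%:R * deg A i).

Definition laplacian A : 'M[R]_n := degmx A - A.

Definition connected_graph A : Prop :=
  forall u v, connect [rel x y | 0 < A x y] u v.

Definition is_pinv L X : Prop :=
  [/\ L *m X *m L = L, X *m L *m X = X,
      (L *m X)^T = L *m X & (X *m L)^T = X *m L].

Definition ind u : 'cV[R]_n := \col_i (i == u)%:R.

Definition effres X u v : R :=
  ((ind u - ind v)^T *m X *m (ind u - ind v)) 0 0.

Definition stat A x : R := deg A x / \sum_(y < n) deg A y.

Definition lazywalk A : 'M[R]_n :=
  \matrix_(i, j) ((i == j)%:R / 2 + A i j / (2 * deg A j)).

Definition walk A (t : nat) u x : R := (iter t (mulmx (lazywalk A)) (ind u)) x 0.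

Definition is_sigma A (sig : 'I_n -> 'I_n -> R) : Prop :=
  forall u x,
    (fun N : nat => 2^-1 * \sum_(t < N) (walk A t u x - stat A x)) @ \oo
      --> sig u x.

Definition eps_approx (eps r rt : R) : Prop :=
  (1 - eps) * r <= rt /\ rt <= (1 + eps) * r.

End Defs.

(* Main.v *)
Require Import Defs.
From HB Require Import structures.
From mathcomp Require Import all_boot all_order all_algebra.
From mathcomp Require Import all_classical all_reals all_analysis.
From mathcomp Require Import ring lra.
Import Order.TTheory GRing.Theory Num.Theory.
Import numFieldNormedType.Exports.
Local Open Scope ring_scope.
Local Open Scope classical_set_scope.

Lemma sum_delta (R : realType) n (i : 'I_n) (F : 'I_n -> R) :
  \sum_j (i == j)%:R * F j = F i.
Proof.
rewrite (bigD1 i) //= eqxx mul1r big1 ?addr0 // => j /negbTE.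
by rewrite eq_sym => ->; rewrite mul0r.
Qed.

Lemma walkS (R : realType) n (A : 'M[R]_n) t u i :
  walk A t.+1 u i = walk A t u i / 2 + \sum_j A i j * walk A t u j / (2 * deg A j).
Proof.
rewrite /walk /= mxE.
rewrite (eq_bigr (fun j => ((i == j)%:R * walk A t u j) / 2 + A i j * walk A t u j / (2 * deg A j))); last first.
  by move=> j _; rewrite /lazywalk mxE /walk; rewrite mulrDl; congr (_ + _); rewrite mulrAC.
by rewrite big_split /= -mulr_suml sum_delta.
Qed.

Section K.
Variables (R : realType) (n : nat) (A : 'M[R]_n).
Hypothesis sym : forall i j, A i j = A j i.
Hypothesis dpos : forall j, 0 < deg A j.

Lemma volpos (i : 'I_n) : 0 < \sum_(y < n) deg A y.
Proof.
rewrite (bigD1 i) //=; apply: ltr_pwDl; first exact: dpos.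
by apply: sumr_ge0 => j _; apply: ltW.
Qed.

Lemma stat_fix i : \sum_j A i j * stat A j / deg A j = stat A i.
Proof.
rewrite /stat /deg.
have -> : \sum_j A i j * ((\sum_(v < n) A j v) / \sum_(y < n) \sum_(v < n) A y v) / (\sum_(v < n) A j v)
   = \sum_j A i j / \sum_(y < n) \sum_(v < n) A y v.
  apply: eq_bigr => j _; have := dpos j; rewrite /deg => hj.
  have hv := volpos i.
  field; rewrite /deg in hv; by rewrite ?(lt0r_neq0 hj) ?(lt0r_neq0 hv).
by rewrite mulr_suml.
Qed.

Definition fpart w x N : R := 2^-1 * \sum_(t < N) (walk A t w x - stat A x).

Lemma hident w i N :
  fpart w i N - \sum_j A i j * fpart w j N / deg A j = (i == w)%:R - walk A N w i.
Proof.
elim: N => [|N IH].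
  rewrite /fpart big_ord0 mulr0 big1 ?subr0; last by move=> j _; rewrite /fpart big_ord0 !(mulr0, mul0r).
  by rewrite /walk /= /ind mxE subrr.
have fS x : fpart w x N.+1 = fpart w x N + 2^-1 * (walk A N w x - stat A x).
  by rewrite /fpart big_ord_recr /= mulrDr.
rewrite fS.
have -> : \sum_j A i j * fpart w j N.+1 / deg A j =
   \sum_j A i j * fpart w j N / deg A j + 2^-1 * \sum_j A i j * walk A N w j / deg A j
    - 2^-1 * \sum_j A i j * stat A j / deg A j.
  rewrite !mulr_sumr -big_split -sumrB /=; apply: eq_bigr => j _; rewrite fS.
  have := dpos j => hj; field; rewrite ?(lt0r_neq0 hj) ?pnatr_eq0 //.
rewrite stat_fix.
have -> : walk A N.+1 w i = walk A N w i / 2 + 2^-1 * \sum_j A i j * walk A N w j / deg A j.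
  rewrite walkS mulr_sumr; congr (_ + _); apply: eq_bigr => j _.
  have := dpos j => hj; field; rewrite ?(lt0r_neq0 hj) ?pnatr_eq0 //.
move: IH; lra.
Qed.

Lemma cvg_sumI (f : 'I_n -> nat -> R) (l : 'I_n -> R) :
  (forall j, f j N @[N --> \oo] --> l j) ->
  (\sum_(j < n) f j N) @[N --> \oo] --> \sum_(j < n) l j.
Proof.
move=> H.
have G : forall r : seq 'I_n, (\sum_(j <- r) f j N) @[N --> \oo] --> \sum_(j <- r) l j.
  elim=> [|j r IH].
    under eq_fun do rewrite big_nil.
    rewrite big_nil; exact: cvg_cst.
  under eq_fun do rewrite big_cons.
  rewrite big_cons; exact: cvgD.
exact: G.
Qed.

Lemma keyeq sig w i : is_sigma A sig ->
  sig w i - \sum_j A i j * sig w j / deg A j = (i == w)%:R - stat A i.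
Proof.
move=> hs.
have hf x : fpart w x N @[N --> \oo] --> sig w x by exact: hs.
have L1 : (fpart w i N - \sum_j A i j * fpart w j N / deg A j) @[N --> \oo] -->
    sig w i - \sum_j A i j * sig w j / deg A j.
  apply: cvgB; first exact: hf.
  apply: (@cvg_sumI (fun j N => A i j * fpart w j N / deg A j) (fun j => A i j * sig w j / deg A j)) => j.
  apply: (@cvgMr_tmp _ _ _ _ (fun N => A i j * fpart w j N)).
  apply: (@cvgMl_tmp _ _ _ _ (fun N => fpart w j N)).
  exact: hf.
have L2 : (fpart w i N - \sum_j A i j * fpart w j N / deg A j) @[N --> \oo] -->
    (i == w)%:R - stat A i.
  have -> : (fun N => fpart w i N - \sum_j A i j * fpart w j N / deg A j) =
     (fun N => ((i == w)%:R - stat A i) - 2 * (fpart w i N.+1 - fpart w i N)).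
    apply: funext => N; rewrite hident /fpart big_ord_recr /=.
    by field.
  have : (((i == w)%:R - stat A i) - 2 * (fpart w i N.+1 - fpart w i N)) @[N --> \oo]
     --> ((i == w)%:R - stat A i) - 2 * (sig w i - sig w i).
    apply: cvgB; first exact: cvg_cst.
    apply: (@cvgMl_tmp _ _ _ _ (fun N => fpart w i N.+1 - fpart w i N)).
    apply: (@cvgB _ _ _ _ _ (fun N => fpart w i N.+1) (fun N => fpart w i N)); last exact: hf.
    by have := hf i; rewrite -cvg_shiftS.
  by rewrite subrr mulr0 subr0.

exact: (cvg_unique _ L1 L2).
Qed.

End K.

Lemma tr_ind (R : realType) n (w : 'cV[R]_n) x : (w^T *m ind R x) 0 0 = w x 0.
Proof.
rewrite mxE (bigD1 x) //= !mxE eqxx mulr1 big1 ?addr0 // => j /negbTE hj.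
by rewrite !mxE hj mulr0.
Qed.

Lemma ind_tr (R : realType) n (w : 'cV[R]_n) x : ((ind R x)^T *m w) 0 0 = w x 0.
Proof.
rewrite mxE (bigD1 x) //= !mxE eqxx mul1r big1 ?addr0 // => j /negbTE hj.
by rewrite !mxE hj mul0r.
Qed.

Lemma Lmul (R : realType) n (A : 'M[R]_n) (w : 'cV[R]_n) i :
  (laplacian A *m w) i 0 = deg A i * w i 0 - \sum_k A i k * w k 0.
Proof.
rewrite mxE.
rewrite (eq_bigr (fun k => (i == k)%:R * (deg A i * w k 0) - A i k * w k 0)); last first.
  by move=> k _; rewrite /laplacian !mxE mulrBl mulrA.
by rewrite sumrB sum_delta.
Qed.

Lemma expand (R : realType) n (L : 'M[R]_n) (w1 w2 : 'cV[R]_n) t :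
  ((w1 - t *: w2)^T *m L *m (w1 - t *: w2)) 0 0 =
  (w1^T *m L *m w1) 0 0 - t * (w1^T *m L *m w2) 0 0 - t * (w2^T *m L *m w1) 0 0
  + t ^+ 2 * (w2^T *m L *m w2) 0 0.
Proof.
have -> : (w1 - t *: w2)^T = w1^T - t *: w2^T by apply/matrixP => i j; rewrite !mxE.
rewrite !(mulmxBl, mulmxBr) -!scalemxAl -!scalemxAr; try rewrite -!scalemxAl.
set M1 := w1^T *m L *m w1; set M2 := w1^T *m L *m w2.
set M3 := w2^T *m L *m w1; set M4 := w2^T *m L *m w2.
rewrite !mxE; ring.
Qed.

Lemma psd (R : realType) n (A : 'M[R]_n) (w : 'cV[R]_n) :
  (forall i j, A i j = A j i) -> (forall i j, 0 <= A i j) ->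
  0 <= (w^T *m laplacian A *m w) 0 0.
Proof.
move=> sym hnn.
rewrite -mulmxA mxE.
have eT : \sum_j w^T 0 j * (laplacian A *m w) j 0 =
   \sum_i \sum_k A i k * w i 0 * (w i 0 - w k 0).
  apply: eq_bigr => i _; rewrite Lmul !mxE /deg mulr_suml -sumrB mulr_sumr.
  by apply: eq_bigr => k _; ring.
have eT' : \sum_i \sum_k A i k * w i 0 * (w i 0 - w k 0) =
   \sum_i \sum_k A i k * w k 0 * (w k 0 - w i 0).
  rewrite exchange_big /=; apply: eq_bigr => i _; apply: eq_bigr => k _.
  by rewrite sym.
have h2 : 0 <= \sum_i \sum_k A i k * w i 0 * (w i 0 - w k 0) +
               \sum_i \sum_k A i k * w k 0 * (w k 0 - w i 0).
  rewrite -big_split /=; apply: sumr_ge0 => i _; rewrite -big_split /=.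
  apply: sumr_ge0 => k _.
  have -> : A i k * w i 0 * (w i 0 - w k 0) + A i k * w k 0 * (w k 0 - w i 0)
     = A i k * (w i 0 - w k 0) ^+ 2 by ring.
  by apply: mulr_ge0 => //; apply: sqr_ge0.
rewrite eT; move: h2; rewrite -eT'; lra.
Qed.

Lemma div_bd (R : realType) (a b d e : R) : 0 < d -> `|a - b| <= e ->
  a / d - b / d <= e / d /\ - (e / d) <= a / d - b / d.
Proof.
move=> hd; rewrite ler_norml => /andP [h1 h2].
rewrite -mulrBl -mulNr; split; rewrite ler_pM2r ?invr_gt0 //.
Qed.

Theorem lemma3p4 (R : realType) (n : nat) (A X : 'M[R]_n)
    (sig sigt : 'I_n -> 'I_n -> R) (eps : R) :
  A^T = A ->
  (forall i j, 0 <= A i j) ->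
  connected_graph A ->
  is_pinv (laplacian A) X ->
  is_sigma A sig ->
  0 < eps ->
  (forall u x, `|sigt u x - sig u x| <= eps / 4) ->
  forall u v, 0 < A u v ->
    eps_approx eps (effres X u v)
      (sigt u u / deg A u - sigt u v / deg A v
       + sigt v v / deg A v - sigt v u / deg A u).
Proof.
move=> hT hnn hconn hpinv hs heps herr u v huv.
have sym i j : A i j = A j i by rewrite -[in LHS]hT mxE.
case: (eqVneq u v) => [<-|neq].
  rewrite /effres subrr mulmx0 mxE.
  have -> : sigt u u / deg A u - sigt u u / deg A u + sigt u u / deg A u -
     sigt u u / deg A u = 0 by ring.
  by rewrite /eps_approx !mulr0; split.
have degge j k : A j k <= deg A j.
  rewrite /deg (bigD1 k) //= lerDl; apply: sumr_ge0 => *; exact: hnn.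
have dpos j : 0 < deg A j.
  case: (eqVneq j u) => [->|nju]; first exact: (lt_le_trans huv (degge u v)).
  have := hconn j u; move/connectP => [[|k p] hp hl]; first by rewrite /= in hl; rewrite hl eqxx in nju.
  move: hp => /= /andP [hjk _]; exact: (lt_le_trans hjk (degge j k)).
set L := laplacian A.
set y := fun w x => sig w x / deg A x.
set zc : 'cV[R]_n := \col_i (y u i - y v i).
set b : 'cV[R]_n := ind R u - ind R v.
have F1 : L *m zc = b.
  apply/matrixP => i j; rewrite (ord1 j) Lmul.
  have e : \sum_k A i k * zc k 0 = \sum_k A i k * sig u k / deg A k - \sum_k A i k * sig v k / deg A k.
    rewrite -sumrB; apply: eq_bigr => k _; rewrite /zc /y mxE; have := dpos k => hk.
    by field; rewrite lt0r_neq0.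
  rewrite e /zc /y mxE /b !mxE.
  have := @keyeq R n A dpos sig u i hs; have := @keyeq R n A dpos sig v i hs; have := dpos i => hi.
  have -> : deg A i * (sig u i / deg A i - sig v i / deg A i) = sig u i - sig v i.
    by field; rewrite lt0r_neq0.
  lra.
have F2 : L^T = L.
  apply/matrixP => i j; rewrite /L /laplacian !mxE sym.
  by case: (eqVneq i j) => [->|nij] //; rewrite !mul0r.
case: hpinv => hLXL _ _ _.
have Rq : effres X u v = (zc^T *m L *m zc) 0 0.
  rewrite /effres -/b -F1 trmx_mul F2.
  have -> : zc^T *m L *m X *m (L *m zc) = zc^T *m (L *m X *m L) *m zc by rewrite !mulmxA.
  by rewrite hLXL.
have RS : effres X u v = sig u u / deg A u - sig u v / deg A v
       + sig v v / deg A v - sig v u / deg A u.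
  have subE (M N : 'M[R]_1) : (M - N) 0 0 = M 0 0 - N 0 0 by rewrite !mxE.
  rewrite Rq -mulmxA F1 /b mulmxBr subE !tr_ind /zc /y !mxE; ring.
have bnd x t : 0 <= effres X u v - 2 * t * b x 0 + t ^+ 2 * L x x.
  have := @psd R n A (zc - t *: ind R x) sym hnn; rewrite -/L expand -Rq.
  have -> : (zc^T *m L *m ind R x) 0 0 = b x 0.
    have -> : zc^T *m L = (L *m zc)^T by rewrite trmx_mul F2.
    by rewrite F1 tr_ind.
  have -> : ((ind R x)^T *m L *m ind R x) 0 0 = L x x.
    by rewrite -mulmxA ind_tr !mxE (bigD1 x) //= !mxE eqxx mulr1 big1 ?addr0 // => j /negbTE hj; rewrite !mxE hj mulr0.
  rewrite -mulmxA F1 ind_tr; lra.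
have Lxx x : L x x <= deg A x.
  by rewrite /L /laplacian !mxE eqxx mul1r lerBlDr lerDl hnn.
have lbu : (deg A u)^-1 <= effres X u v.
  have bu : b u 0 = 1 by rewrite /b !mxE eqxx (negbTE neq) subr0.
  have := bnd u (deg A u)^-1; rewrite bu.
  have : (deg A u)^-1 ^+ 2 * L u u <= (deg A u)^-1.
    apply: (le_trans (y := (deg A u)^-1 ^+ 2 * deg A u)).
      by rewrite ler_wpM2l ?sqr_ge0.
    have := dpos u => hu; rewrite expr2 -mulrA mulVf ?mulr1 //; exact: lt0r_neq0.
  lra.
have lbv : (deg A v)^-1 <= effres X u v.
  have bv : b v 0 = -1 by rewrite /b !mxE eqxx eq_sym (negbTE neq) sub0r.
  have := bnd v (- (deg A v)^-1); rewrite bv.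
  have : (- (deg A v)^-1) ^+ 2 * L v v <= (deg A v)^-1.
    rewrite sqrrN.
    apply: (le_trans (y := (deg A v)^-1 ^+ 2 * deg A v)).
      by rewrite ler_wpM2l ?sqr_ge0.
    have := dpos v => hv; rewrite expr2 -mulrA mulVf ?mulr1 //; exact: lt0r_neq0.
  lra.
have [a1 a2] := div_bd _ _ _ _ _ (dpos u) (herr u u).
have [b1 b2] := div_bd _ _ _ _ _ (dpos v) (herr u v).
have [c1 c2] := div_bd _ _ _ _ _ (dpos v) (herr v v).
have [d1 d2] := div_bd _ _ _ _ _ (dpos u) (herr v u).
have eu : eps * (deg A u)^-1 <= eps * effres X u v by rewrite ler_wpM2l // ltW.
have ev : eps * (deg A v)^-1 <= eps * effres X u v by rewrite ler_wpM2l // ltW.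
rewrite /eps_approx; move: a1 a2 b1 b2 c1 c2 d1 d2 eu ev; rewrite RS.
split; lra.
Qed.
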